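(* Let $G$ be a connected cubic graph and let $\mathfrak{T}$ be a spanning tree of $G$ produced by the following algorithm. Fix an indexing $w_1,\dots,w_n$ of $V(G)$ and a root $u\in V(G)$. Let $S_0=\{u\}$ and, for $i\geq 1$, let $S_i$ be the set of vertices at distance exactly $i$ from $u$. Delete every edge of $G$ with both endpoints in the same set $S_i$. Whenever two vertices $w_k,w_s\in S_i$ have a common neighbor $x\in S_{i+1}$, where $w_k$ precedes $w_s$ in the order comparing first by degree and then by index, delete the edge $w_kx$ (so each $x\in S_{i+1}$ keeps exactly one edge to $S_i$). Let $n_3$ denote the number of vertices of degree $3$ in $\mathfrak{T}$. Then $Z(\mathfrak{T})\leq n_3+2$.
   Context: Zero forcing: color each vertex of a graph $H$ black or white; if a black vertex has exactly one white neighbor, that neighbor is recolored black. A set $Z\subseteq V(H)$ is a zero forcing set if starting with exactly $Z$ black and applying this rule repeatedly makes all vertices black; the zero forcing number $Z(H)$ is the minimum size of a zero forcing set. A cubic graph is a $3$-regular simple graph. *)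

(* Defs.v *)
From mathcomp Require Import all_boot.
Set Implicit Arguments. Unset Strict Implicit. Unset Printing Implicit Defensive.

Section Defs.
Variable V : finType.
Implicit Types (e : rel V) (B : {set V}).

Definition force_step e B : {set V} :=
  B :|: [set y | [exists x, [&& x \in B, e x y, y \notin B &
                    [forall z, (e x z && (z \notin B)) ==> (z == y)]]]].

(* closure under the rule (|V| rounds suffice) *)
Definition force_closure e B : {set V} := iter #|V| (force_step e) B.

Definition zero_forcing_set e B : bool := force_closure e B == [set: V].

Definition zero_forcing_number e : nat :=
  #|[arg min_(B < [set: V] | zero_forcing_set e B) #|B|]|.

Fixpoint ball e (u : V) (k : nat) : {set V} :=
  match k with
  | 0 => [set u]
  | k'.+1 => ball e u k' :|: [set y | [exists x in ball e u k', e x y]]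
  end.

(* distance from u (the least k with v in the ball of radius k; for a
   connected graph this is the graph distance) *)
Definition dist e (u v : V) : nat := find (fun k => v \in ball e u k) (iota 0 #|V|).

Definition deg e (v : V) : nat := #|[set w | e v w]|.

End Defs.

Section Tree.
Variable n : nat.
Implicit Types (e : rel 'I_n).

Definition layer_free e (u : 'I_n) : rel 'I_n :=
  fun x y => e x y && (dist e u x != dist e u y).

Definition prec e (u : 'I_n) (a b : 'I_n) : bool :=
  (deg (layer_free e u) a < deg (layer_free e u) b) ||
  ((deg (layer_free e u) a == deg (layer_free e u) b) && (val a < val b)).

(* y is the kept parent of x: y in S_i, x in S_{i+1}, xy in G, and no other
   neighbour c of x in S_i is bigger than y in the order (all edges w_k x
   with w_k preceding another neighbour w_s are deleted) *)
Definition parent_edge e (u : 'I_n) (x y : 'I_n) : bool :=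
  [&& e x y, dist e u x == (dist e u y).+1 &
      [forall c, (e x c && (dist e u c == dist e u y)) ==> ~~ prec e u y c]].

Definition bfs_tree e (u : 'I_n) : rel 'I_n :=
  fun x y => parent_edge e u x y || parent_edge e u y x.

End Tree.

(* Main.v *)
Require Import Defs.
From mathcomp Require Import all_boot.
From mathcomp Require Import zify.
Set Implicit Arguments. Unset Strict Implicit. Unset Printing Implicit Defensive.

Section Closure.
Variable V : finType.
Variable e : rel V.

Lemma step_ext (B : {set V}) : B \subset force_step e B.
Proof. exact: subsetUl. Qed.

Lemma iter_ext k (B : {set V}) : B \subset iter k (force_step e) B.
Proof.
elim: k => [|k IH] /=; first exact: subxx.
exact: subset_trans IH (step_ext _).
Qed.

Lemma closure_fix (B : {set V}) : force_step e (force_closure e B) \subset force_closure e B.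
Proof.
rewrite /force_closure.
set f := force_step e.
have H : forall k, f (iter k f B) = iter k f B \/ k <= #|iter k f B|.
  elim=> [|k IH]; first by right.
  case: IH => [fx|le].
    by left; rewrite iterS !fx.
  case: (boolP (f (iter k f B) == iter k f B)) => [/eqP fx|nfx].
    by left; rewrite iterS !fx.
  right; rewrite iterS.
  have pr : iter k f B \proper f (iter k f B).
    by rewrite properEneq eq_sym nfx step_ext.
  exact: leq_ltn_trans le (proper_card pr).
case: (H #|V|) => [-> //|le].
have eT : iter #|V| f B = [set: V].
  by apply/eqP; rewrite eqEcard subsetT cardsT le.
by rewrite eT subsetT.
Qed.

End Closure.

Section Main.
Variable n : nat.
Variable e : rel 'I_n.
Variable u : 'I_n.
Hypothesis e_sym : symmetric e.
Hypothesis cubic : forall v, deg e v = 3.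
Hypothesis conn : forall v w, connect e v w.

Lemma ball_step k y z : y \in ball e u k -> e y z -> z \in ball e u k.+1.
Proof.
move=> yk eyz /=; rewrite in_setU; apply/orP; right; rewrite inE.
by apply/existsP; exists y; rewrite yk eyz.
Qed.

Lemma path_ball x p k : x \in ball e u k -> path e x p -> last x p \in ball e u (k + size p).
Proof.
elim: p x k => [|y p IH] x k /=; first by rewrite addn0.
move=> xk /andP[exy py]; rewrite addnS -addSn; apply: IH py.
exact: ball_step xk exy.
Qed.

Lemma reach x : exists2 k, k < #|'I_n| & x \in ball e u k.
Proof.
have /connectP[p pp ->] := conn u x.
case/shortenP: pp => p' pp' up' _.
exists (size p'); last first.
  have := @path_ball u p' 0; rewrite add0n; apply => //; by rewrite /= inE.
have h := max_card (mem (u :: p')).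
by rewrite (card_uniqP up') in h.
Qed.

Lemma has_s x : has (fun k => x \in ball e u k) (iota 0 #|'I_n|).
Proof.
case: (reach x) => k kl kb; apply/hasP; exists k => //.
by rewrite mem_iota add0n kl.
Qed.

Lemma dist_lt x : dist e u x < #|'I_n|.
Proof. by have := has_s x; rewrite has_find size_iota. Qed.

Lemma dist_ball x : x \in ball e u (dist e u x).
Proof.
have := nth_find 0 (has_s x).
have := dist_lt x; rewrite /dist => lt.
by rewrite nth_iota // add0n.
Qed.

Lemma dist_le x k : x \in ball e u k -> dist e u x <= k.
Proof.
move=> xk.
case: (ltnP k #|'I_n|) => [kl|kge]; last by apply: leq_trans (ltnW (dist_lt x)) kge.
rewrite leqNgt; apply/negP=> lt.
have := before_find 0 lt.
by rewrite nth_iota ?add0n ?xk // (ltn_trans lt (dist_lt x)).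
Qed.

Lemma dist_u : dist e u u = 0.
Proof. by apply/eqP; rewrite -leqn0; apply: dist_le; rewrite /= inE. Qed.

Lemma dist0 x : dist e u x = 0 -> x = u.
Proof. by move=> H; have := dist_ball x; rewrite H /= inE => /eqP. Qed.

Lemma dist_edge z y : e z y -> dist e u y <= (dist e u z).+1.
Proof. by move=> ezy; apply: dist_le; apply: ball_step (dist_ball z) ezy. Qed.

Lemma P_e x y : parent_edge e u x y -> e x y.
Proof. by case/and3P. Qed.

Lemma P_dist x y : parent_edge e u x y -> dist e u x = (dist e u y).+1.
Proof. by case/and3P=> _ /eqP. Qed.

Lemma T_e x y : bfs_tree e u x y -> e x y.
Proof. by case/orP => /P_e //; rewrite e_sym. Qed.

Definition key (c : 'I_n) := deg (layer_free e u) c * n + val c.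

Lemma prec_key a b : prec e u a b -> key a < key b.
Proof.
rewrite /prec /key => /orP[lt|/andP[/eqP-> lt]]; last by rewrite ltn_add2l.
apply: (@leq_trans ((deg (layer_free e u) a).+1 * n)).
  by rewrite mulSn addnC ltn_add2r ltn_ord.
exact: leq_trans (leq_mul lt (leqnn n)) (leq_addr _ _).
Qed.

Lemma parent_ex x : x != u -> exists p, parent_edge e u x p.
Proof.
move=> xu.
have dpos : 0 < dist e u x.
  by rewrite lt0n; apply/eqP=> /dist0 /eqP; rewrite (negbTE xu).
have := dist_ball x.
case Ed: (dist e u x) dpos => [//|d] _ /=; rewrite in_setU => /orP[xb|].
  by have := dist_le xb; rewrite Ed ltnn.
rewrite inE => /existsP[z /andP[zb ezx]].
have dz : dist e u z = d.
  apply/eqP; rewrite eqn_leq dist_le //=.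
  by have := dist_edge ezx; rewrite Ed ltnS.
have xz : e x z by rewrite e_sym.
pose A := [set c | e x c && (dist e u c == d)].
have zA : z \in A by rewrite /A inE xz dz eqxx.
case: (@arg_maxnP _ z (mem A) key zA) => p pA pmax.
exists p; have pA2 : p \in A := pA; move: pA2; rewrite /A inE => /andP[hxp /eqP dp].
rewrite /parent_edge hxp Ed /=; apply/andP; split.
  by apply/eqP; congr S; symmetry; exact: dp.
apply/forallP=> c; apply/implyP=> /andP[exc dc].
have dc2 : dist e u c == d by apply/eqP; exact: etrans (eqP dc) dp.
have cA : c \in A by rewrite /A inE exc dc2.
apply/negP=> /prec_key; rewrite ltnNge => /negP; apply; exact: pmax cA.
Qed.

Definition Ch p := [set x | parent_edge e u x p].
Definition pk p := [pick x in Ch p].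
Definition NP p := [set x | parent_edge e u x p && (pk p != Some x)].
Definition B0 := u |: \bigcup_p NP p.

Lemma B0_zf : zero_forcing_set (bfs_tree e u) B0.
Proof.
rewrite /zero_forcing_set eqEsubset subsetT /=.
set C := force_closure _ B0.
have BC : B0 \subset C := iter_ext _ _ _.
have fixC := closure_fix (bfs_tree e u) B0.
suff H : forall k x, dist e u x = k -> x \in C.
  by apply/subsetP=> x _; exact: H _ _ erefl.
elim/ltn_ind=> k IH x dx.
case: (eqVneq x u) => [->|xu]; first by apply: (subsetP BC); rewrite in_setU1 eqxx.
case: (parent_ex xu) => p Pxp.
have dp : dist e u p < k by rewrite -dx (P_dist Pxp).
have pC : p \in C := IH _ dp p erefl.
apply/negPn/negP => xC.
case: (eqVneq (pk p) (Some x)) => [xpk|ne]; last first.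
  apply: (negP xC); apply: (subsetP BC); rewrite in_setU1; apply/orP; right; apply/bigcupP.
  by exists p => //; rewrite inE Pxp ne.
apply: (negP xC); apply: (subsetP fixC).
rewrite /force_step in_setU (negbTE xC) /= inE.
apply/existsP; exists p; rewrite pC /bfs_tree Pxp orbT xC /=.
apply/forallP=> z; apply/implyP=> /andP[Tpz zC].
have zin : z \in C -> False by move=> h; rewrite h in zC.
case/orP: Tpz => [Ppz|Pzp].
  exfalso; apply: zin; apply: (IH (dist e u z)) => //; apply: ltn_trans dp.
  by rewrite (P_dist Ppz) ltnSn.
case: (eqVneq (pk p) (Some z)) => [|ne]; first by rewrite xpk => -[->].
exfalso; apply: zin.
apply: (subsetP BC); rewrite in_setU1; apply/orP; right; apply/bigcupP.
by exists p => //; rewrite inE Pzp ne.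
Qed.

Lemma card_NP p : #|NP p| <= (#|Ch p|).-1.
Proof.
rewrite /NP /pk; case: pickP => [y yC|none].
  rewrite [#|Ch p|](cardsD1 y) yC add1n /=.
  apply: subset_leq_card; apply/subsetP => x; rewrite !inE => /andP[Pxp ne].
  rewrite Pxp andbT; apply: contra ne => /eqP->; exact: eqxx.
suff -> : [set x | parent_edge e u x p & None != Some x] = set0 by rewrite cards0.
apply/setP=> x; rewrite !inE; have := none x; rewrite /= inE => ->; done.
Qed.

Lemma degT_le p : deg (bfs_tree e u) p <= 3.
Proof.
rewrite -(cubic p); apply: subset_leq_card; apply/subsetP=> z; rewrite !inE.
exact: T_e.
Qed.

Lemma Ch_sub p : Ch p \subset [set w | bfs_tree e u p w].
Proof. by apply/subsetP=> z; rewrite !inE /bfs_tree => ->; rewrite orbT. Qed.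

Lemma arith1 (b : bool) c d : b -> c <= d -> d <= 3 -> c.-1 <= b + (d == 3).
Proof. by case: b => //= _; case: d => [|[|[|[|d]]]] //=; lia. Qed.

Lemma arith2 (b : bool) c d : ~~ b -> c.+1 <= d -> d <= 3 -> c.-1 <= b + (d == 3).
Proof. by case: b => //= _; case: d => [|[|[|[|d]]]] //=; lia. Qed.

Lemma term_bound p : (#|Ch p|).-1 <= (p == u) + (deg (bfs_tree e u) p == 3).
Proof.
have dle := degT_le p.
have cle : #|Ch p| <= deg (bfs_tree e u) p := subset_leq_card (Ch_sub p).
case: (eqVneq p u) => [pu1|pu].
  by apply: arith1 cle dle; apply/eqP.
case: (parent_ex pu) => q Ppq.
have qCh : q \notin Ch p.
  rewrite inE; apply/negP=> Pqp.
  have := P_dist Ppq; rewrite (P_dist Pqp); lia.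
have : #|q |: Ch p| <= deg (bfs_tree e u) p.
  apply: subset_leq_card; apply/subsetP => z; rewrite !inE => /orP[/eqP->|].
    by rewrite /bfs_tree Ppq.
  by rewrite /bfs_tree => ->; rewrite orbT.
rewrite cardsU1 qCh add1n => h.
exact: (@arith2 false _ _ isT h dle).
Qed.

Lemma B0_card : #|B0| <= #|[set v | deg (bfs_tree e u) v == 3]| + 2.
Proof.
have h1 : #|\bigcup_p NP p| <= \sum_p #|NP p|.
  apply: (big_ind2 (fun (S : {set 'I_n}) k => #|S| <= k)).
  - by rewrite cards0.
  - move=> A a B b hA hB; apply: leq_trans (leq_card_setU A B) _.
    exact: leq_add.
  - by [].
have h2 : \sum_p #|NP p| <= \sum_p ((p == u) + (deg (bfs_tree e u) p == 3)).
  apply: leq_sum => p _; exact: leq_trans (card_NP p) (term_bound p).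
rewrite big_split /= in h2.
have h3 : \sum_(p : 'I_n) (p == u) = 1.
  rewrite (bigD1 u) //= eqxx big1 // => i /negbTE ->; done.
have h4 : \sum_(p : 'I_n) (deg (bfs_tree e u) p == 3) = #|[set v | deg (bfs_tree e u) v == 3]|.
  rewrite -sum1_card [RHS]big_mkcond /=; apply: eq_bigr => i _; rewrite inE.
  by case: (_ == 3).
rewrite h3 h4 in h2.
have hB : #|B0| <= 1 + #|\bigcup_p NP p|.
  by rewrite /B0 cardsU1 leq_add2r leq_b1.
have h12 := leq_trans hB (leq_add (leqnn 1) (leq_trans h1 h2)).
apply: leq_trans h12 _.
by rewrite addnA addnC.
Qed.

End Main.

Theorem mainTheorem4 (n : nat) (e : rel 'I_n) (u : 'I_n)
  (e_sym : symmetric e) (e_irr : irreflexive e)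
  (cubic : forall v : 'I_n, deg e v = 3)
  (conn : forall v w : 'I_n, connect e v w) :
  zero_forcing_number (bfs_tree e u) <=
    #|[set v : 'I_n | deg (bfs_tree e u) v == 3]| + 2.
Proof.
have zfT : zero_forcing_set (bfs_tree e u) [set: 'I_n].
  rewrite /zero_forcing_set eqEsubset subsetT /=.
  exact: iter_ext.
rewrite /zero_forcing_number.
case: (@arg_minnP _ [set: 'I_n] (zero_forcing_set (bfs_tree e u)) (fun B => #|B|) zfT) => B0' _ hmin.
have h1 := hmin (B0 e u) (B0_zf u e_sym conn). have h2 := B0_card u e_sym cubic conn. exact: (leq_trans h1 h2).
Qed.
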